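(* Let $p$ be the transition density of a subordinator as described in the context, and let $q\colon\mathbb{R}\to[0,\infty]$ be measurable. Assume that for some $s<t$ and some $M<\infty$, for all $x\in\mathbb{R}$, $$\int_s^t\int_{\mathbb{R}}p(s,x,u,z)q(z)\,dz\,du\le M.$$ Then $q\in L^1_{loc}(\mathbb{R})$.
   Context: A subordinator is a nondecreasing Lévy process on $\mathbb{R}$. We assume its distribution at each time $t>0$ has a density $p_t$ with respect to Lebesgue measure, and set $p(s,x,t,y)=p_{t-s}(y-x)$ for $s<t$; $p$ is space-time homogeneous, $p(s,x,t,y)=0$ whenever $t\le s$ or $y\le x$, and $p(s,x,t,y)>0$ otherwise. *)

(* Defs.v *)
From HB Require Import structures.
From mathcomp Require Import all_boot all_order all_algebra.
From mathcomp Require Import all_classical all_reals all_analysis.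
From mathcomp Require Import measurable_realfun.
Set Implicit Arguments. Unset Strict Implicit. Unset Printing Implicit Defensive.
Import Order.TTheory GRing.Theory Num.Theory.
Import numFieldNormedType.Exports.
Local Open Scope classical_set_scope.
Local Open Scope ring_scope.

(* [p t y] is the density at y of the law of X_t, for t > 0, where X is a
   subordinator (nondecreasing Levy process).  Its one-dimensional laws form a
   weakly (stochastically) continuous convolution semigroup of probability
   measures carried by [0, +oo); conversely every such semigroup is the
   family of one-dimensional laws of a subordinator.  The version of the
   densities is chosen as in the paper: p_t(y) = 0 for y <= 0 and
   p_t(y) > 0 for y > 0, jointly measurable in (t, y). *)
Definition subordinator_density (R : realType) (p : R -> R -> R) : Prop :=
  measurable_fun [set tz : R * R | 0 < tz.1] (fun tz => p tz.1 tz.2) /\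
      (forall t y, 0 < t -> y <= 0 -> p t y = 0) /\
      (forall t y, 0 < t -> 0 < y -> 0 < p t y) /\
      (forall t, 0 < t -> (\int[lebesgue_measure]_y (p t y)%:E = 1)%E) /\
      (forall t r, 0 < t -> 0 < r ->
         {ae lebesgue_measure, forall y, (p (t + r) y)%:E =
            (\int[lebesgue_measure]_z (p t z * p r (y - z))%:E)%E}) /\
      (forall e, 0 < e ->
         (fun t => \int[lebesgue_measure]_(y in `]e, +oo[) (p t y)%:E)%E
           @ 0^'+ --> 0%E).

Definition ptrans (R : realType) (p : R -> R -> R) (s x t y : R) : R :=
  if s < t then p (t - s) (y - x) else 0.

(* Main.v *)
Require Import Defs.
From HB Require Import structures.
From mathcomp Require Import all_boot all_order all_algebra.
From mathcomp Require Import all_classical all_reals all_analysis.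
From mathcomp Require Import measurable_realfun.
From mathcomp Require Import lra.
Set Implicit Arguments. Unset Strict Implicit. Unset Printing Implicit Defensive.
Import Order.TTheory GRing.Theory Num.Theory.
Import numFieldNormedType.Exports.
Local Open Scope classical_set_scope.
Local Open Scope ring_scope.
Local Open Scope ereal_scope.
Section S.
Context (R : realType).
Notation mu := (@lebesgue_measure R).
Definition phiN (z : R) : measurableTypeR R -> measurableTypeR R := fun x => (z - x)%R.

Lemma mphi (z : R) : measurable_fun setT (phiN z).
Proof. exact: measurable_funB. Qed.

Lemma reflect_measure (z : R) (A : set R) : measurable A ->
  mu ((fun x => z - x)%R @^-1` A) = mu A.
Proof.
move=> mA.
pose pm := @measure_function_pushforward__canonical__measure_function_Measure _ _ _ _ _ mu _ (mphi z).
suff h : mu A = pm A by rewrite h.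
apply: (lebesgue_measure_unique (mu := pm)) mA.
move=> X [[a b] _ <-] /=; rewrite /pushforward /=.
have -> : phiN z @^-1` `]a, b] = [set` `[z - b, z - a[%R].
  apply/seteqP; split => x /=; rewrite /phiN !in_itv /=.
    by move=> /andP[h1 h2]; apply/andP; split; lra.
  by move=> /andP[h1 h2]; apply/andP; split; lra.
rewrite !lebesgue_measure_itv /=.
rewrite !lte_fin.
have -> : (z - b < z - a)%R = (a < b)%R by apply/idP/idP => h; lra.
by case: ifP => // _; rewrite -!EFinD; congr EFin; lra.
Qed.

Lemma reflect_integral (z : R) (f : R -> \bar R) : measurable_fun setT f ->
  (forall y, 0 <= f y) -> \int[mu]_x f (z - x)%R = \int[mu]_y f y.
Proof.
move=> mf f0.
pose pm := @measure_function_pushforward__canonical__measure_function_Measure _ _ _ _ _ mu _ (mphi z).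
have h1 : \int[mu]_y f y = \int[pm]_y f y.
  apply: (eq_measure_integral pm) => A mA _.
  rewrite /pm /= /pushforward; apply/esym; exact: (reflect_measure z mA).
rewrite h1.
have := ge0_integral_pushforward (mphi z) mu measurableT mf (fun y _ => f0 y).
rewrite preimage_setT => ->.
by [].
Qed.
End S.
Lemma integral_gt0 d (T : measurableType d) (R : realType)
  (m : {measure set T -> \bar R}) (D : set T) (f : T -> \bar R) :
  measurable D -> measurable_fun D f -> (forall x, D x -> 0 < f x) ->
  0 < m D -> 0 < \int[m]_(x in D) f x.
Proof.
move=> mD mf fpos mD0.
rewrite lt0e integral_ge0 ?andbT; last by move=> x /fpos /ltW.
apply/negP => /eqP h.
have : \int[m]_(x in D) `|f x| = 0.
  by rewrite -h; apply: eq_integral => x /[!inE] Dx; rewrite gee0_abs// ltW// fpos.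
move/(ae_eq_integral_abs m mD mf) => [N [mN N0 sN]].
have DN : D `<=` N.
  move=> x Dx; apply: sN => /= /(_ Dx) fx0.
  by have := fpos x Dx; rewrite fx0 ltxx.
have := le_measure m (mem_set mD) (mem_set mN) DN.
move=> H; have : m D <= 0 by apply: (le_trans H); rewrite le_eqVlt; apply/orP; left; apply/eqP; exact: N0.
by rewrite leNgt mD0.
Qed.

Section Meas.
Context (R : realType) d (T : measurableType d).
Lemma mcompR2 (F : R * R -> R) (f1 f2 : T -> R) :
  measurable_fun setT F -> measurable_fun setT f1 -> measurable_fun setT f2 ->
  measurable_fun setT (fun w => F (f1 w, f2 w)).
Proof.
move=> mF m1 m2.
exact: (measurableT_comp mF (measurable_fun_pair m1 m2)).
Qed.
Lemma mindic (D : set R) (f : T -> R) : measurable D -> measurable_fun setT f ->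
  measurable_fun setT (fun w => \1_D (f w) : R).
Proof.
move=> mD mf; have mi : measurable_fun setT (\1_D : R -> R) by exact: measurable_indic.
exact: (measurableT_comp mi mf).
Qed.
End Meas.

Section T3.
Context (R : realType).
Notation mu := (@lebesgue_measure R).
Variable K : R -> R -> R -> \bar R.
Hypothesis K0 : forall x u z, 0 <= K x u z.
Hypothesis mK : measurable_fun setT (fun w : R * (R * R) => K w.1 w.2.1 w.2.2).

Lemma mK_uz x : measurable_fun setT (fun uz : R * R => K x uz.1 uz.2).
Proof.
apply: (measurableT_comp mK (g := fun uz : R * R => (x, uz))).
exact: measurable_fun_pair.
Qed.

Lemma mK_xu z : measurable_fun setT (fun xu : R * R => K xu.1 xu.2 z).
Proof.
apply: (measurableT_comp mK (g := fun xu : R * R => (xu.1, (xu.2, z)))).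
apply: measurable_fun_pair => //.
exact: measurable_fun_pair.
Qed.

Lemma mK_xz_u : measurable_fun setT (fun w : (R * R) * R => K w.1.1 w.2 w.1.2).
Proof.
apply: (measurableT_comp mK (g := fun w : (R * R) * R => (w.1.1, (w.2, w.1.2)))).
apply: measurable_fun_pair.
  exact: (measurableT_comp measurable_fst measurable_fst).
apply: measurable_fun_pair => //.
exact: (measurableT_comp measurable_snd measurable_fst).
Qed.

Lemma mK_xu_z : measurable_fun setT (fun w : (R * R) * R => K w.1.1 w.1.2 w.2).
Proof.
apply: (measurableT_comp mK (g := fun w : (R * R) * R => (w.1.1, (w.1.2, w.2)))).
apply: measurable_fun_pair.
  exact: (measurableT_comp measurable_fst measurable_fst).
apply: measurable_fun_pair => //.
exact: (measurableT_comp measurable_snd measurable_fst).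
Qed.

Lemma mK_x_zu : measurable_fun setT (fun w : R * (R * R) => K w.1 w.2.2 w.2.1).
Proof.
apply: (measurableT_comp mK (g := fun w : R * (R * R) => (w.1, (w.2.2, w.2.1)))).
apply: measurable_fun_pair => //.
apply: measurable_fun_pair.
  exact: (measurableT_comp measurable_snd measurable_snd).
exact: (measurableT_comp measurable_fst measurable_snd).
Qed.

Lemma mK_x_z : measurable_fun setT (fun xz : R * R => \int[mu]_u K xz.1 u xz.2).
Proof.
exact: (@measurable_fun_fubini_tonelli_F _ _ _ _ _ mu _ mK_xz_u (fun _ => K0 _ _ _)).
Qed.

Lemma mX : measurable_fun setT (fun x => \int[mu]_u \int[mu]_z K x u z).
Proof.
have m1 : measurable_fun setT (fun xu : R * R => \int[mu]_z K xu.1 xu.2 z).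
  exact: (@measurable_fun_fubini_tonelli_F _ _ _ _ _ mu _ mK_xu_z (fun _ => K0 _ _ _)).
exact: (@measurable_fun_fubini_tonelli_F _ _ _ _ _ mu _ m1
  (fun _ => integral_ge0 _ (fun _ _ => K0 _ _ _))).
Qed.

Lemma mZ : measurable_fun setT (fun z => \int[mu]_u \int[mu]_x K x u z).
Proof.
have m1 : measurable_fun setT (fun zu : R * R => \int[mu]_x K x zu.2 zu.1).
  exact: (@measurable_fun_fubini_tonelli_G _ _ _ _ _ mu _ mK_x_zu (fun _ => K0 _ _ _)).
exact: (@measurable_fun_fubini_tonelli_F _ _ _ _ _ mu _ m1
  (fun _ => integral_ge0 _ (fun _ _ => K0 _ _ _))).
Qed.

Lemma tonelli3 : \int[mu]_x \int[mu]_u \int[mu]_z K x u z =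
  \int[mu]_z \int[mu]_u \int[mu]_x K x u z.
Proof.
transitivity (\int[mu]_x \int[mu]_z \int[mu]_u K x u z).
  apply: eq_integral => x _.
  exact: (@fubini_tonelli _ _ _ _ _ mu mu (fun uz : R * R => K x uz.1 uz.2) (mK_uz x) (fun _ => K0 _ _ _)).
transitivity (\int[mu]_z \int[mu]_x \int[mu]_u K x u z).
  apply: (@fubini_tonelli _ _ _ _ _ mu mu (fun xz : R * R => \int[mu]_u K xz.1 u xz.2) mK_x_z).
  by move=> xz; apply: integral_ge0.
apply: eq_integral => z _.
exact: (@fubini_tonelli _ _ _ _ _ mu mu (fun xu : R * R => K xu.1 xu.2 z) (mK_xu z) (fun _ => K0 _ _ _)).
Qed.
End T3.
Section P.
Context (R : realType) (p : R -> R -> R) (hp : subordinator_density p).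
Notation mu := (@lebesgue_measure R).

Definition Pp : R * R -> R := (fun tz => p tz.1 tz.2) \_ [set tz : R * R | (0 < tz.1)%R].

Lemma mpos : measurable [set tz : R * R | (0 < tz.1)%R].
Proof.
have := @measurable_fst _ _ R R measurableT _ (measurable_itv `]0%R, +oo[).
by rewrite setTI; congr measurable; apply/seteqP; split => x /=; rewrite in_itv /= andbT.
Qed.

Lemma mPp : measurable_fun setT Pp.
Proof. by apply/(measurable_restrictT _ mpos); case: hp. Qed.

Lemma Pp_ge0 tz : (0 <= Pp tz)%R.
Proof.
rewrite /Pp patchE; case: ifPn => // /set_mem /= t0.
case: hp => _ [h0 [hpos _]].
have [y0|y0] := leP tz.2 0%R; first by rewrite h0.
exact/ltW/hpos.
Qed.

Lemma Pp_gt0 r y : (0 < r)%R -> (0 < y)%R -> (0 < Pp (r, y))%R.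
Proof.
move=> r0 y0; rewrite /Pp patchE mem_set//=.
by case: hp => _ [_ [hpos _]]; exact: hpos.
Qed.

Lemma ptransE s x u z : ptrans p s x u z = Pp (u - s, z - x)%R.
Proof.
rewrite /ptrans /Pp patchE; case: ifPn => su.
  by rewrite mem_set //= subr_gt0.
by case: ifPn => // /set_mem /=; rewrite subr_gt0 (negbTE su).
Qed.
End P.
Section Main.
Context (R : realType) (p : R -> R -> R) (hp : subordinator_density p)
  (q : R -> \bar R) (mq : measurable_fun setT q) (q0 : forall z, 0 <= q z)
  (s t M : R) (st : (s < t)%R)
  (hM : forall x : R, \int[lebesgue_measure]_(u in `]s, t[)
        \int[lebesgue_measure]_z ((ptrans p s x u z)%:E * q z) <= M%:E)
  (a b : R).
Notation mu := (@lebesgue_measure R).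
Let I : set R := [set` `[a - 2, b - 1]%R].
Let J : set R := [set` `]s, t[%R].
Let B : set R := [set` `[1, 2]%R].
Let mI : measurable I. Proof. exact: measurable_itv. Qed.
Let mJ : measurable J. Proof. exact: measurable_itv. Qed.
Let mB : measurable B. Proof. exact: measurable_itv. Qed.

Let ind_ge0 (D : set R) x : (0 <= \1_D x :> R)%R.
Proof. by rewrite indicE ler0n. Qed.

Let g (x u z : R) : R := (\1_I x * \1_J u * Pp p (u - s, z - x))%R.
Let K (x u z : R) := (g x u z)%:E * q z.

Let g_ge0 x u z : (0 <= g x u z)%R.
Proof. by rewrite /g !mulr_ge0 ?ind_ge0 ?Pp_ge0. Qed.

Let K0 x u z : 0 <= K x u z.
Proof. by rewrite /K mule_ge0 ?lee_fin ?g_ge0. Qed.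

Let mK : measurable_fun setT (fun w : R * (R * R) => K w.1 w.2.1 w.2.2).
Proof.
apply: emeasurable_funM.
  apply/measurable_EFinP; rewrite /g.
  apply: measurable_funM; first apply: measurable_funM.
  - exact: mindic.
  - by apply: mindic => //; exact: (measurableT_comp measurable_fst measurable_snd).
  - apply: mcompR2; first exact: mPp.
      apply: measurable_funB => //; exact: (measurableT_comp measurable_fst measurable_snd).
    apply: measurable_funB => //; exact: (measurableT_comp measurable_snd measurable_snd).
exact: (measurableT_comp mq (measurableT_comp measurable_snd measurable_snd)).
Qed.


Let hx x : \int[mu]_u \int[mu]_z K x u z <= (\1_I x * M)%:E.
Proof.
have [xI|xI] := boolP (x \in I).
- rewrite indicE xI mul1r.
  apply: le_trans (hM x).
  rewrite [X in _ <= X]integral_mkcond le_eqVlt; apply/orP; left; apply/eqP; apply: eq_integral => u _.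
  rewrite patchE; case: ifPn => uJ.
    apply: eq_integral => z _; rewrite /K /g ptransE !indicE xI.
    by rewrite (_ : u \in J) ?mul1r.
  rewrite (eq_integral (cst 0)) ?integral0// => z _.
  by rewrite /K /g [\1_J u]indicE (_ : u \in J = false) ?mulr0 ?mul0r ?mul0e//; apply/negbTE.
- rewrite indicE (negbTE xI) mul0r (eq_integral (cst 0)) ?integral0// => u _.
  rewrite (eq_integral (cst 0)) ?integral0// => z _.
  by rewrite /K /g indicE (negbTE xI) !mul0r mul0e.
Qed.

Let M0 : (0 <= M)%R.
Proof.
rewrite -lee_fin; apply: le_trans (hM 0%R).
apply: integral_ge0 => u _; apply: integral_ge0 => z _.
by rewrite mule_ge0 // lee_fin ptransE Pp_ge0.
Qed.

Let TU : \int[mu]_x \int[mu]_u \int[mu]_z K x u z <= M%:E * mu I.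
Proof.
have mf2 : measurable_fun setT (fun x => (\1_I x * M)%:E).
  apply/measurable_EFinP; apply: measurable_funM => //; exact: mindic.
apply: (le_trans (ge0_le_integral mu measurableT _ (mX K0 mK) mf2 (fun x _ => hx x))).
  by move=> x _; apply: integral_ge0 => u _; apply: integral_ge0.
under eq_integral => x _ do rewrite EFinM muleC.
rewrite ge0_integralZl_EFin //; last by apply/measurable_EFinP; exact: mindic.
rewrite integral_indic; [|exact: measurableT|exact: mI].
by rewrite setIT.
Qed.

Let TUfin : M%:E * mu I < +oo.
Proof.
rewrite /I lebesgue_measure_itv /=; case: ifP => _.
  by rewrite -EFinD -EFinM ltry.
by rewrite mule0 ltry.
Qed.


Let g0E z (xu : R * R) : 0 <= (g xu.1 xu.2 z)%:E.
Proof. by rewrite lee_fin g_ge0. Qed.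

Let mg_xu z : measurable_fun setT (fun xu : R * R => (g xu.1 xu.2 z)%:E).
Proof.
apply/measurable_EFinP; rewrite /g.
apply: measurable_funM; first apply: measurable_funM.
- exact: mindic.
- exact: mindic.
- apply: mcompR2; first exact: mPp.
    by apply: measurable_funB.
  by apply: measurable_funB.
Qed.

Let Lam z := \int[mu]_u \int[mu]_x (g x u z)%:E.

Let stepL z : \int[mu]_u \int[mu]_x K x u z = Lam z * q z.
Proof.
transitivity (\int[mu]_u ((\int[mu]_x (g x u z)%:E) * q z)).
  apply: eq_integral => u _; rewrite /K.
  apply: (ge0_integralZr mu measurableT) => //.
    exact: (measurable_fun_pair1 u (mg_xu z)).
  by move=> x _; rewrite lee_fin g_ge0.
apply: (ge0_integralZr mu measurableT) => //.
  exact: (@measurable_fun_fubini_tonelli_G _ _ _ _ _ mu _ (mg_xu z)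
    (g0E z)).
by move=> u _; apply: integral_ge0 => x _; rewrite lee_fin g_ge0.
Qed.

Let h (u y : R) : R := (\1_J u * \1_B y * Pp p (u - s, y))%R.

Let h_ge0 u y : (0 <= h u y)%R.
Proof. by rewrite /h !mulr_ge0 ?ind_ge0 ?Pp_ge0. Qed.

Let h0E (uy : R * R) : 0 <= (h uy.1 uy.2)%:E.
Proof. by rewrite lee_fin h_ge0. Qed.

Let mh : measurable_fun setT (fun uy : R * R => (h uy.1 uy.2)%:E).
Proof.
apply/measurable_EFinP; rewrite /h.
apply: measurable_funM; first apply: measurable_funM.
- exact: mindic.
- exact: mindic.
- apply: mcompR2; first exact: mPp.
    by apply: measurable_funB.
  by [].
Qed.

Let kappa := \int[mu]_u \int[mu]_y (h u y)%:E.

Let Lam_ge (z : R) : (a <= z <= b)%R -> kappa <= Lam z.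
Proof.
move=> /andP[az zb].
apply: (ge0_le_integral mu measurableT).
- by move=> u _; apply: integral_ge0 => y _; rewrite lee_fin h_ge0.
- exact: (@measurable_fun_fubini_tonelli_F _ _ _ _ _ mu _ mh
    h0E).
- exact: (@measurable_fun_fubini_tonelli_G _ _ _ _ _ mu _ (mg_xu z)
    (g0E z)).
move=> u _.
pose f := fun y : R => (\1_I (z - y) * \1_J u * Pp p (u - s, y))%:E.
have mf : measurable_fun setT f.
  apply/measurable_EFinP.
  apply: measurable_funM; first apply: measurable_funM.
  - by apply: mindic => //; exact: measurable_funB.
  - exact: measurable_cst.
  - apply: mcompR2; first exact: mPp.
      exact: measurable_cst.
    by [].
have f0 y : 0 <= f y by rewrite /f lee_fin !mulr_ge0 ?ind_ge0 ?Pp_ge0.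
rewrite (_ : \int[mu]_x (g x u z)%:E = \int[mu]_x f (z - x)%R); last first.
  apply: eq_integral => x _; rewrite /f /g.
  by have -> : (z - (z - x) = x)%R by lra.
rewrite (reflect_integral z mf f0).
apply: (ge0_le_integral mu measurableT).
- by move=> y _; rewrite lee_fin h_ge0.
- exact: (measurable_fun_pair2 u mh).
- exact: mf.
move=> y _; rewrite /f /h lee_fin.
have [yB|yB] := boolP (y \in B).
  have zyI : (z - y)%R \in I.
    move: yB; rewrite /B /I !inE /= !in_itv /= => /andP[y1 y2].
    by apply/andP; split; lra.
  by rewrite [\1_B y]indicE [\1_I _]indicE yB zyI mulr1 mul1r.
rewrite [\1_B y]indicE (negbTE yB) mulr0 mul0r.
by rewrite !mulr_ge0 ?ind_ge0 ?Pp_ge0.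
Qed.


Let kappa_gt0 : 0 < kappa.
Proof.
have mL : measurable_fun setT (fun u => \int[mu]_y (h u y)%:E).
  exact: (@measurable_fun_fubini_tonelli_F _ _ _ _ _ mu _ mh h0E).
apply: (lt_le_trans _ (ge0_subset_integral mu mJ measurableT mL _ (@subsetT _ J))); last first.
  by move=> u _; apply: integral_ge0 => y _; rewrite lee_fin h_ge0.
apply: integral_gt0 => //.
- exact: measurable_funTS.
- move=> u uJ.
  apply: (lt_le_trans _ (ge0_subset_integral mu mB measurableT
    (measurable_fun_pair2 u mh) _ (@subsetT _ B))); last first.
    by move=> y _; rewrite lee_fin h_ge0.
  apply: integral_gt0 => //.
  + exact: measurable_funTS (measurable_fun_pair2 u mh).
  + move=> y yB; rewrite lte_fin /h !indicE (mem_set uJ) (mem_set yB) !mul1r.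
    move: uJ yB; rewrite /J /B /= !in_itv /= => /andP[su _] /andP[y1 _].
    by apply: Pp_gt0 => //; lra.
  + change (0%R < (@lebesgue_measure R) B); by rewrite /B lebesgue_measure_itv /= lte_fin; case: ifP => h12; rewrite ?lte_fin; lra.
change (0%R < (@lebesgue_measure R) J); by rewrite /J lebesgue_measure_itv /= lte_fin st -EFinD lte_fin subr_gt0.
Qed.

Lemma main_finite : \int[mu]_(z in `[a, b]) q z < +oo.
Proof.
have [r [r0 rk]] : exists r : R, (0 < r)%R /\ r%:E <= kappa.
  move: kappa_gt0; case: kappa => [r||]//.
  - by move=> r0; exists r; split => //; rewrite -lte_fin.
  - by move=> _; exists 1%R; split => //; rewrite leey.
have mAB : measurable [set` `[a, b]%R] by exact: measurable_itv.
have mqAB : measurable_fun setT (q \_ [set` `[a, b]%R]).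
  by apply/(measurable_restrictT _ mAB); exact: measurable_funTS.
have H1 : r%:E * \int[mu]_(z in `[a, b]) q z <= M%:E * mu I.
  have q0AB : forall z, [set: R] z -> 0 <= (q \_ [set` `[a, b]%R]) z.
    by move=> z _; rewrite patchE; case: ifPn.
  rewrite integral_mkcond -(ge0_integralZl_EFin mu measurableT q0AB mqAB (ltW r0)).
  apply: le_trans TU.
  rewrite (tonelli3 K0 mK).
  apply: (ge0_le_integral mu measurableT).
  - by move=> z _; apply: mule_ge0; [rewrite lee_fin ltW | exact: q0AB].
  - by apply: emeasurable_funM => //; exact: measurable_cst.
  - exact: (mZ K0 mK).
  move=> z _; rewrite patchE; case: ifPn => zAB; last first.
    by rewrite mule0; apply: integral_ge0 => u _; apply: integral_ge0.
  rewrite stepL; apply: lee_wpmul2r => //.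
  apply: (le_trans rk); apply: Lam_ge.
  by move: zAB; rewrite inE /= in_itv.
have := le_lt_trans H1 TUfin.
have : 0 <= \int[mu]_(z in `[a, b]) q z by apply: integral_ge0.
case: (\int[mu]_(z in `[a, b]) q z) => [x _ _|_|//]; first exact: ltry.
by rewrite gt0_muley ?lte_fin // ltxx.
Qed.

End Main.




Lemma bounded_interval (R : realType) (A : set R) : compact A ->
  exists a b : R, A `<=` [set` `[a, b]%R].
Proof.
move=> cA.
have [M0 [_ HM]] := compact_bounded cA.
have := HM (`|M0| + 1)%R.
have h : (M0 < `|M0| + 1)%R by have := ler_norm M0; lra.
move=> /(_ h) HA.
exists (- (`|M0| + 1))%R, (`|M0| + 1)%R => x Ax.
have := HA x Ax; rewrite /= in_itv /= => hx.
by rewrite -ler_norml.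
Qed.

Local Close Scope ereal_scope.
Unset Implicit Arguments.
Theorem lemma3p2 (R : realType) (p : R -> R -> R) (q : R -> \bar R)
  (s t M : R) :
  subordinator_density p ->
  measurable_fun [set: R] q ->
  (forall z, (0 <= q z)%E) ->
  s < t ->
  (forall x : R,
     (\int[lebesgue_measure]_(u in `]s, t[)
        \int[lebesgue_measure]_z ((ptrans p s x u z)%:E * q z) <= M%:E)%E) ->
  forall A : set R, compact A -> lebesgue_measure.-integrable A q.
Proof.
move=> hp mq q0 st hM A cA.
have [a [b sA]] := bounded_interval cA.
have mA : measurable A.
  by apply: closed_measurable; apply: compact_closed => //; exact: Rhausdorff.
apply/integrableP; split; first exact: measurable_funTS.
apply: le_lt_trans (main_finite hp mq q0 st hM a b).
under eq_integral => x _ do rewrite gee0_abs//.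
exact: (ge0_subset_integral lebesgue_measure mA (measurable_itv _)
  (measurable_funTS mq) (fun x _ => q0 x) sA).
Qed.
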